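(* Let $\mathcal N$ be a monotonic max $(\mathrm{Col},\delta)$-GNN with $L$ layers and dimensions $\delta_0,\dots,\delta_L$, and let $\delta_{\mathcal N}=\max(\delta_0,\dots,\delta_L)$. Let $\Pi_{\mathcal N}$ be the Datalog program containing, up to variable renaming, every $(L,\,|\mathrm{Col}|\cdot\delta_{\mathcal N})$-tree-like rule without inequalities (over the $(\mathrm{Col},\delta)$-signature) that is captured by $\mathcal N$. Then $\mathcal N$ and $\Pi_{\mathcal N}$ are equivalent, i.e. $T_{\mathcal N}(D)=T_{\Pi_{\mathcal N}}(D)$ for every $(\mathrm{Col},\delta)$-dataset $D$.
   Context: Datalog. Fix disjoint countably infinite sets of predicates (each with an arity), constants and variables. A term is a constant or a variable; an atom is $P(t_1,\dots,t_n)$ with $P$ of arity $n$; an inequality is $t_1\neq t_2$; a literal is an atom or an inequality; a fact is a variable-free atom; a dataset is a finite set of facts. A rule has the form $B_1\wedge\dots\wedge B_n\to H$ with $n\ge0$, literals $B_i$ and an atom $H$ (no safety condition; the empty body is written $\top$). A substitution maps finitely many variables to variable-free terms. For a rule $r$ and dataset $D$, $T_r(D)$ is the set of facts $H\nu$ for each substitution $\nu$ mapping all variables of $r$ to terms occurring in $D$ such that $B_i\nu\in D$ for each body atom and $s\neq t$ for each instantiated body inequality $s\neq t$. For a program (finite set of rules) $\Pi$, $T_\Pi(D)=\bigcup_{r\in\Pi}T_r(D)$. Two rules are equal up to variable renaming if a bijection between their variable sets maps one onto the other with exactly the same conjuncts. Graphs and GNNs. For a finite set of colours $\mathrm{Col}$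 and $\delta\in\mathbb N$, a $(\mathrm{Col},\delta)$-graph is $G=\langle V,\{E^c\}_{c\in\mathrm{Col}},\lambda\rangle$ where $V$ is a finite vertex set, $E^c\subseteq V\times V$, and $\lambda$ assigns each vertex a vector in $\mathbb R^\delta$; it is Boolean if all feature entries are in $\{0,1\}$. A $(\mathrm{Col},\delta)$-GNN $\mathcal N$ with $L\ge 1$ layers consists of dimensions $\delta_0=\delta,\delta_1,\dots,\delta_{L-1},\delta_L=\delta$; real matrices $A_\ell$, $B_\ell^c$ of size $\delta_\ell\times\delta_{\ell-1}$ and bias vectors $b_\ell\in\mathbb R^{\delta_\ell}$ ($1\le\ell\le L$, $c\in\mathrm{Col}$); aggregation functions $\mathrm{agg}_\ell$ from finite real multisets to $\mathbb R$ (applied componentwise); an activation $\sigma:\mathbb R\to\mathbb R$ and a classification function $\mathrm{cls}:\mathbb R\to\{0,1\}$ (both componentwise). Applying $\mathcal N$ to $G$ yields labellings $\lambda_0=\lambda,\dots,\lambda_L$ with $\mathbf v_\ell=\sigma\big(A_\ell\mathbf v_{\ell-1}+\sum_{c}B_\ell^c\,\mathrm{agg}_\ell(\{\!\{\mathbf u_{\ell-1}\mid (v,u)\in E^c\}\!\})+b_\ell\big)$; $\mathcal N(G)$ has the same vertices and edges with each $v$ labelled $\mathrm{cls}(\mathbf v_L)$. Canonical transformation. The $(\mathrm{Col},\delta)$-signature consists of binary predicates $E^c$ ($c\in\mathrm{Col}$) and unary predicates $U_1,\dots,U_\delta$; a $(\mathrm{Col},\delta)$-dataset is a dataset over this signature.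 Its canonical encoding $\mathrm{enc}(D)$ has a vertex $v_t$ per term $t$ occurring in $D$, edges $(v_t,v_s)\in E^c$ iff $E^c(t,s)\in D$, and $i$-th feature of $v_t$ equal to $1$ iff $U_i(t)\in D$ (else $0$). The canonical decoding of a Boolean graph contains $E^c(t,s)$ for each edge $(v_t,v_s)\in E^c$ and $U_i(t)$ for each vertex $v_t$ with $i$-th feature $1$. $T_{\mathcal N}(D)=\mathrm{dec}(\mathcal N(\mathrm{enc}(D)))$. $\mathcal N$ captures a rule or program $\alpha$ if $T_\alpha(D)\subseteq T_{\mathcal N}(D)$ for every $(\mathrm{Col},\delta)$-dataset $D$; they are equivalent if $T_\alpha(D)=T_{\mathcal N}(D)$ for all such $D$. Monotonic max GNN: a $(\mathrm{Col},\delta)$-GNN with all entries of all $A_\ell,B_\ell^c$ nonnegative, each $\mathrm{agg}_\ell=\max$ (componentwise maximum of the multiset, and $0$ for the empty multiset), $\sigma$ monotonically increasing, unbounded and with range $\mathbb R_{\ge0}$, and $\mathrm{cls}$ a step function with some threshold $t$ ($\mathrm{cls}(t')=0$ for $t'<t$, $=1$ for $t'\ge t$). Tree-like formulas. Defined inductively: for any variable $x$, $\top$ is tree-like for $x$; for any unary predicate $U$, $U(x)$ is tree-like for $x$; if $\varphi_1,\varphi_2$ are tree-like for $x$ and share no variable other than $x$, then $\varphi_1\wedge\varphi_2$ is tree-like for $x$; if $E^c$ is a binary predicate and $\varphi_1,\dots,\varphi_n$ are tree-like for pairwise distinct variables $y_1,\dots,y_n$ respectively, none containing $x$ and pairwise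 sharing no variable, then $\bigwedge_{i=1}^n(E^c(x,y_i)\wedge\varphi_i)\wedge\bigwedge_{1\le i<j\le n}y_i\neq y_j$ is tree-like for $x$. In a tree-like formula $\varphi$, the fan-out of a variable $x$ is the number of distinct variables $y$ with $E^c(x,y)$ a conjunct of $\varphi$ for some $c$; the depth of $x$ is the maximal $n$ such that there are variables $x_0,\dots,x_n=x$ and colours with $E^{c_i}(x_{i-1},x_i)$ a conjunct for $1\le i\le n$; the depth of $\varphi$ is the maximal depth of its variables. For natural numbers $d,f$, $\varphi$ is $(d,f)$-tree-like if every variable of depth $i$ has $i\le d$ and fan-out at most $f\cdot(d-i)$. A rule is $(d,f)$-tree-like if it has the form $\varphi\to U(x)$ with $U$ unary and $\varphi$ a $(d,f)$-tree-like formula for $x$. *)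

(* Defs.v *)
From HB Require Import structures.
From mathcomp Require Import all_boot all_order all_algebra.
From mathcomp Require Import reals.
Set Implicit Arguments. Unset Strict Implicit. Unset Printing Implicit Defensive.
Import Order.TTheory GRing.Theory Num.Theory.
Local Open Scope ring_scope.

(* Colours: a finite type C.  Unary predicates U_i: indexed by nat i      *)
(* (the signature allows i < delta).  Constants and variables: nat.        *)
Section Syntax.
Variable C : finType.

Inductive fact := FEdge of C & nat & nat
                | FUn of nat & nat.

Definition fact_enc (f : fact) : (C * nat * nat) + (nat * nat) :=
  match f with FEdge c a b => inl (c, a, b) | FUn i a => inr (i, a) end.
Definition fact_dec (s : (C * nat * nat) + (nat * nat)) : fact :=
  match s with inl (c, a, b) => FEdge c a b | inr (i, a) => FUn i a end.
Lemma fact_encK : cancel fact_enc fact_dec. Proof. by case. Qed.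
HB.instance Definition _ := Equality.copy fact (can_type fact_encK).

Inductive term := TVar of nat | TCst of nat.
Definition term_enc (t : term) : nat + nat :=
  match t with TVar v => inl v | TCst c => inr c end.
Definition term_dec (s : nat + nat) : term :=
  match s with inl v => TVar v | inr c => TCst c end.
Lemma term_encK : cancel term_enc term_dec. Proof. by case. Qed.
HB.instance Definition _ := Equality.copy term (can_type term_encK).

Inductive atom := AEdge of C & term & term | AUn of nat & term.
Definition atom_enc (a : atom) : (C * term * term) + (nat * term) :=
  match a with AEdge c s t => inl (c, s, t) | AUn i t => inr (i, t) end.
Definition atom_dec (s : (C * term * term) + (nat * term)) : atom :=
  match s with inl (c, s, t) => AEdge c s t | inr (i, t) => AUn i t end.
Lemma atom_encK : cancel atom_enc atom_dec. Proof. by case. Qed.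
HB.instance Definition _ := Equality.copy atom (can_type atom_encK).

Inductive literal := LAtom of atom | LNeq of term & term.
Definition lit_enc (l : literal) : atom + (term * term) :=
  match l with LAtom a => inl a | LNeq s t => inr (s, t) end.
Definition lit_dec (s : atom + (term * term)) : literal :=
  match s with inl a => LAtom a | inr (s, t) => LNeq s t end.
Lemma lit_encK : cancel lit_enc lit_dec. Proof. by case. Qed.
HB.instance Definition _ := Equality.copy literal (can_type lit_encK).
Record rule := Rule { rbody : seq literal; rhead : atom }.

Definition term_vars (t : term) : seq nat :=
  if t is TVar v then [:: v] else [::].
Definition atom_vars (a : atom) : seq nat :=
  match a with AEdge _ s t => term_vars s ++ term_vars t
             | AUn _ t => term_vars t end.
Definition lit_vars (l : literal) : seq nat :=
  match l with LAtom a => atom_vars a | LNeq s t => term_vars s ++ term_vars t end.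
Definition fvars (phi : seq literal) : seq nat := flatten (map lit_vars phi).
Definition rule_vars (r : rule) : seq nat := fvars (rbody r) ++ atom_vars (rhead r).

Definition fact_consts (f : fact) : seq nat :=
  match f with FEdge _ a b => [:: a; b] | FUn _ a => [:: a] end.
Definition consts (D : seq fact) : seq nat := flatten (map fact_consts D).

Definition dataset (delta : nat) (D : seq fact) : Prop :=
  forall i a, FUn i a \in D -> (i < delta)%N.

Definition gterm (nu : nat -> nat) (t : term) : nat :=
  match t with TVar v => nu v | TCst c => c end.
Definition gatom (nu : nat -> nat) (a : atom) : fact :=
  match a with AEdge c s t => FEdge c (gterm nu s) (gterm nu t)
             | AUn i t => FUn i (gterm nu t) end.

Definition T_rule (r : rule) (D : seq fact) (f : fact) : Prop :=
  exists nu : nat -> nat,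
    [/\ forall v, v \in rule_vars r -> nu v \in consts D,
        forall a, LAtom a \in rbody r -> gatom nu a \in D,
        forall s t, LNeq s t \in rbody r -> gterm nu s <> gterm nu t
      & f = gatom nu (rhead r)].

Definition evar (x y : nat) (c : C) : literal := LAtom (AEdge c (TVar x) (TVar y)).

Definition disj_vars (p q : seq literal) : Prop :=
  forall v, v \in fvars p -> v \notin fvars q.

Inductive treelike (delta : nat) : nat -> seq literal -> Prop :=
| tl_top x : treelike delta x [::]
| tl_un x i : (i < delta)%N -> treelike delta x [:: LAtom (AUn i (TVar x))]
| tl_conj x p q : treelike delta x p -> treelike delta x q ->
    (forall v, v \in fvars p -> v \in fvars q -> v = x) ->
    treelike delta x (p ++ q)
| tl_edge x (c : C) (ch : seq (nat * seq literal)) :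
    (* ch = [:: (y_1, phi_1); ...; (y_n, phi_n)] *)
    uniq (map fst ch) ->
    (forall p, p \in ch -> treelike delta p.1 p.2) ->
    (forall p, p \in ch -> x \notin fvars p.2) ->
    (forall i j, (i < size ch)%N -> (j < size ch)%N -> i <> j ->
        disj_vars (nth (0%N, [::]) ch i).2 (nth (0%N, [::]) ch j).2) ->
    treelike delta x
      (flatten [seq evar x p.1 c :: p.2 | p <- ch] ++
       [seq LNeq (TVar (nth (0%N, [::]) ch ij.1).1) (TVar (nth (0%N, [::]) ch ij.2).1)
         | ij <- [seq ij <- [seq (i, j) | i <- iota 0 (size ch), j <- iota 0 (size ch)]
                  | (ij.1 < ij.2)%N]]).

Definition fanout (phi : seq literal) (v : nat) : nat :=
  size (undup (pmap (fun l => match l with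
                              | LAtom (AEdge _ (TVar u) (TVar y)) =>
                                  if u == v then Some y else None
                              | _ => None end) phi)).

Inductive chain (phi : seq literal) : nat -> nat -> Prop :=
| ch0 v : chain phi 0 v
| chS n u v c : chain phi n u -> evar u v c \in phi -> chain phi n.+1 v.

Definition depth_is (phi : seq literal) (v n : nat) : Prop :=
  chain phi n v /\ forall m, chain phi m v -> (m <= n)%N.

Definition is_ineq (l : literal) : bool := if l is LNeq _ _ then true else false.

Definition df_treelike (delta d f : nat) (x : nat) (phi : seq literal) : Prop :=
  treelike delta x phi /\
  forall v i, v \in fvars phi -> depth_is phi v i ->
    (i <= d)%N /\ (fanout phi v <= f * (d - i))%N.

Definition df_treelike_rule_noineq (delta d f : nat) (r : rule) : Prop :=
  exists x i, [/\ (i < delta)%N, rhead r = AUn i (TVar x),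
                  df_treelike delta d f x (rbody r)
                & ~~ has is_ineq (rbody r)].
End Syntax.

Record gnn (R : realType) (C : finType) := GNN {
  nlayers : nat;
  dims : nat -> nat;
  mA : forall l, 'M[R]_(dims l.+1, dims l);
  mB : forall l, C -> 'M[R]_(dims l.+1, dims l);
  bias : forall l, 'cV[R]_(dims l.+1);
  sigma : R -> R;
  thr : R   (* threshold of the step classification function *)
}.

Definition is_monotonic_max_gnn (R : realType) (C : finType) (delta : nat)
    (N : gnn R C) : Prop :=
  [/\ (1 <= nlayers N)%N,
      dims N 0 = delta /\ dims N (nlayers N) = delta,
      (forall l i j, (l < nlayers N)%N -> 0 <= mA N l i j) /\
      (forall l c i j, (l < nlayers N)%N -> 0 <= mB N l c i j),
      {homo sigma N : x y / x <= y}
    & (forall M : R, exists x, M < sigma N x) /\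
      (forall y : R, 0 <= y <-> exists x, sigma N x = y)].

(* maximum of a finite multiset (list) of reals; 0 for the empty one *)
Definition mmax (R : realType) (s : seq R) : R :=
  if s is h :: t then foldr Num.max h t else 0.

Section Apply.
Variables (R : realType) (C : finType) (N : gnn R C) (D : seq (fact C)).

Definition nbrs (c : C) (a : nat) : seq nat :=
  pmap (fun f => if f is FEdge c' a' b then
                   if (c' == c) && (a' == a) then Some b else None
                 else None) D.

Definition feat0 (a : nat) : 'cV[R]_(dims N 0) :=
  \col_(i < dims N 0) (if @FUn C i a \in D then 1 else 0).

(* labelling lambda_l (vertices v_a for the terms a of D) *)
Fixpoint lab (l : nat) : nat -> 'cV[R]_(dims N l) :=
  match l with
  | 0 => feat0
  | l'.+1 => fun a =>
      map_mx (sigma N)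
        (mA N l' *m lab l' a
         + \sum_(c : C) (mB N l' c *m
              \col_(k < dims N l') mmax [seq lab l' b k 0 | b <- nbrs c a])
         + bias N l')
  end.

Definition ventry n (v : 'cV[R]_n) (i : nat) : R :=
  if (insub i : option 'I_n) is Some k then v k 0 else 0.

Definition T_gnn (f : fact C) : Prop :=
  match f with
  | FEdge _ _ _ => f \in D
  | FUn i a => [/\ a \in consts D, (i < dims N (nlayers N))%N
                 & thr N <= ventry (lab (nlayers N) a) i]
  end.
End Apply.

Definition captures (R : realType) (C : finType) (delta : nat) (N : gnn R C)
    (r : rule C) : Prop :=
  forall D, dataset delta D -> forall f, T_rule r D f -> T_gnn N D f.

Definition delta_N (R : realType) (C : finType) (N : gnn R C) : nat :=
  \max_(l < (nlayers N).+1) dims N l.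

(* T_{Pi_N}(D): union of T_r(D) over all (L, |Col| * delta_N)-tree-like
   rules without inequalities that are captured by N (taking all such rules,
   rather than one per renaming class, gives the same union). *)
Definition T_PiN (R : realType) (C : finType) (delta : nat) (N : gnn R C)
    (D : seq (fact C)) (f : fact C) : Prop :=
  exists r : rule C,
    [/\ df_treelike_rule_noineq delta (nlayers N) (#|C| * delta_N N)%N r,
        captures delta N r
      & T_rule r D f].

Definition is_edge_fact (C : finType) (f : fact C) : bool :=
  if f is FEdge _ _ _ then true else false.

(* Main.v *)
Require Import Defs.
From mathcomp Require Import all_boot all_order all_algebra.
From mathcomp Require Import reals.
From mathcomp Require Import zify.
Set Implicit Arguments. Unset Strict Implicit. Unset Printing Implicit Defensive.
Import Order.TTheory GRing.Theory Num.Theory.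

Definition amax (R : realType) (f : nat -> R) (s : seq nat) : nat :=
  if s is b :: t then foldr (fun x m => if (f m < f x)%R then x else m) b t else 0%N.

Lemma amaxP (R : realType) (f : nat -> R) b t :
  foldr (fun x m => if (f m < f x)%R then x else m) b t \in b :: t /\
  forall x, x \in b :: t -> (f x <= f (foldr (fun x m => if (f m < f x)%R then x else m) b t))%R.
Proof.
elim: t => [|y t IH] /=.
  by split; [rewrite mem_seq1 | move=> x; rewrite mem_seq1 => /eqP->].
move: IH; set m := foldr _ b t => -[Hm Hx].
have sub : forall x, x \in b :: t -> x \in b :: y :: t.
  by move=> x; rewrite !in_cons => /orP[->|->]; rewrite ?orbT.
have split3 : forall x, x \in b :: y :: t -> (x == y) || (x \in b :: t).
  by move=> x; rewrite !in_cons => /or3P[->|->|->]; rewrite ?orbT.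
case: ltP => H; split.
- by rewrite !in_cons eqxx orbT.
- move=> x /split3 /orP[/eqP->//|/Hx Hxm]; exact: (le_trans Hxm (ltW H)).
- exact: sub.
- by move=> x /split3 /orP[/eqP->//|/Hx].
Qed.

Lemma amax_in (R : realType) (f : nat -> R) s : s != [::] -> amax f s \in s.
Proof. by case: s => [//|b t] _; case: (amaxP f b t). Qed.

Lemma amax_ge (R : realType) (f : nat -> R) s x : x \in s -> (f x <= f (amax f s))%R.
Proof. by case: s => [//|b t] Hx; case: (amaxP f b t) => _; apply. Qed.

Lemma mmax_ge (R : realType) (s : seq R) x : x \in s -> (x <= mmax s)%R.
Proof.
case: s => [//|h t] /=.
elim: t x => [|y t IH] x /=; first by rewrite mem_seq1 => /eqP->.
rewrite !in_cons le_max => /or3P[/eqP->|/eqP->|xt].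
- by rewrite (IH h) ?orbT // mem_head.
- by rewrite lexx.
- by rewrite (IH x) ?orbT // in_cons xt orbT.
Qed.

Lemma mmax_le (R : realType) (s : seq R) M : s != [::] ->
  (forall x, x \in s -> (x <= M)%R) -> (mmax s <= M)%R.
Proof.
case: s => [//|h t] _ /=.
elim: t => [|y t IH] H /=; first by apply: H; rewrite mem_head.
rewrite ge_max H ?IH //; last by rewrite !in_cons eqxx orbT.
by move=> x; rewrite in_cons => /orP[/eqP->|xt]; apply: H; rewrite !in_cons ?eqxx ?xt ?orbT.
Qed.

Lemma mmax_ge0 (R : realType) (s : seq R) :
  (forall x, x \in s -> (0 <= x)%R) -> (0 <= mmax s)%R.
Proof.
case: s => [//|h t] H; apply: le_trans (mmax_ge (mem_head h t)); exact: H (mem_head _ _).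
Qed.

Lemma cat_cons_inj (T : Type) (s s' q : seq T) x x' :
  s ++ x :: q = s' ++ x' :: q -> x = x'.
Proof.
move=> E.
have Hs : size s = size s' by move/(congr1 size): E; rewrite !size_cat /=; move/eqP; rewrite eqn_add2r => /eqP.
have := congr1 (drop (size s)) E; rewrite drop_size_cat // drop_size_cat //.
by case.
Qed.

Lemma cat_cons_neq (T : Type) (s q : seq T) x : s ++ x :: q <> q.
Proof. move/(congr1 size); rewrite size_cat /= ; lia. Qed.

Lemma mem_nbrs (C : finType) (D : seq (fact C)) c x b :
  (b \in nbrs D c x) = (FEdge c x b \in D).
Proof.
rewrite /nbrs mem_pmap; apply/mapP/idP.
- case=> [[c' x' b'|i y]] Hin //=; case: ifP => // /andP[/eqP Ec /eqP Ex] [Eb]; by subst.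
- by move=> H; exists (FEdge c x b) => //=; rewrite !eqxx.
Qed.

Lemma mem_consts (C : finType) (D : seq (fact C)) f x :
  f \in D -> x \in fact_consts f -> x \in consts D.
Proof. by move=> Hf Hx; apply/flattenP; exists (fact_consts f) => //; apply: map_f. Qed.

Lemma mem_fvars (C : finType) (p : seq (literal C)) v :
  v \in fvars p -> exists2 l, l \in p & v \in lit_vars l.
Proof. by case/flattenP => s /mapP[l Hl ->] Hv; exists l. Qed.

Lemma flatten_cons' (T : Type) (s : seq T) ss : flatten (s :: ss) = s ++ flatten ss.
Proof. by []. Qed.

Lemma fvars_cat (C : finType) (p q : seq (literal C)) : fvars (p ++ q) = fvars p ++ fvars q.
Proof. by rewrite /fvars map_cat flatten_cat. Qed.

Lemma tl_edge1 (C : finType) delta x y (c : C) q :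
  treelike delta y q -> x \notin fvars q -> treelike delta x (evar x y c :: q).
Proof.
move=> Hq Hx.
have := @tl_edge C delta x c [:: (y, q)].
move=> /= H. have H1 := H isT. rewrite !cats0 in H1. apply: H1.
- by move=> p; rewrite mem_seq1 => /eqP->.
- by move=> p; rewrite mem_seq1 => /eqP->.
- by move=> [|i] [|j] //.
Qed.

Lemma tl_units (C : finType) delta x (ks : seq nat) :
  all (fun k => k < delta) ks -> treelike delta x [seq LAtom (AUn C k (TVar x)) | k <- ks].
Proof.
elim: ks => [|k ks IH] /=; first by constructor.
case/andP=> Hk Hks.
apply: (@tl_conj C delta x [:: _] _ (tl_un C x Hk) (IH Hks)).
by move=> v; rewrite /fvars /= mem_seq1 => /eqP.
Qed.

Section Construction.
Variables (R : realType) (C : finType) (delta : nat) (N : gnn R C).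
Variables (D : seq (fact C)) (a : nat).
Local Notation L := (nlayers N).
Local Notation pth := (seq (C * nat * nat)).

Definition var (q : pth) : nat := pickle q.

Lemma var_inj : injective var.
Proof. exact: pcan_inj pickleK. Qed.

Fixpoint g (q : pth) : nat :=
  match q with
  | [::] => a
  | (c, k, l) :: p => amax (fun b => ventry (lab N D l b) k) (nbrs D c (g p))
  end.

Definition units (q : pth) : seq (literal C) :=
  [seq LAtom (AUn C k (TVar (var q))) | k <- [seq k <- iota 0 delta | FUn C k (g q) \in D]].

Definition kids (h : nat) (q : pth) : pth :=
  [seq ck <- [seq (c, k, h) | c <- enum C, k <- iota 0 (dims N h)] | nbrs D ck.1.1 (g q) != [::]].

Fixpoint phi (h : nat) (q : pth) : seq (literal C) :=
  match h with
  | 0 => units q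
  | h'.+1 => phi h' q ++
      flatten [seq evar (var q) (var (ck :: q)) ck.1.1 :: phi h' (ck :: q) | ck <- kids h' q]
  end.

Definition hgt (q : pth) : nat := if q is (_, _, l) :: _ then l else L.

Lemma mem_kids h q ck : ck \in kids h q ->
  exists c k, [/\ ck = (c, k, h), k < dims N h & nbrs D c (g q) != [::]].
Proof.
rewrite mem_filter => /andP[Hn /allpairsP[[c k] [_ /= Hk Eck]]]; subst ck.
by exists c, k; split => //; move: Hk; rewrite mem_iota add0n => /andP[].
Qed.

Lemma in_kids h q c k : k < dims N h -> nbrs D c (g q) != [::] -> (c, k, h) \in kids h q.
Proof.
move=> Hk Hn; rewrite mem_filter Hn /=.
by apply: (allpairs_f (fun c k => (c, k, h))); rewrite ?mem_enum ?mem_iota.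
Qed.

Lemma uniq_kids h q : uniq (kids h q).
Proof.
apply: filter_uniq; apply: allpairs_uniq; rewrite ?enum_uniq ?iota_uniq //.
by move=> [c k] [c' k'] _ _ /= [-> ->].
Qed.

Lemma vars_units q v : v \in fvars (units q) -> v = var q.
Proof.
case/mem_fvars => l /mapP[k _ ->]; by rewrite /= mem_seq1 => /eqP.
Qed.

Lemma vars_fold q (F : C * nat * nat -> seq (literal C)) (cs : pth) v :
  (forall ck, ck \in cs -> forall v, v \in fvars (F ck) -> exists s, v = var (s ++ ck :: q)) ->
  v \in fvars (flatten [seq evar (var q) (var (ck :: q)) ck.1.1 :: F ck | ck <- cs]) ->
  v = var q \/ exists ck, ck \in cs /\ exists s, v = var (s ++ ck :: q).
Proof.
elim: cs => [|ck cs IH] HF //.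
rewrite map_cons flatten_cons' fvars_cat mem_cat => /orP[|Hv].
- rewrite /fvars /= !in_cons => /orP[/eqP->|/orP[/eqP->|Hv]]; first by left.
    by right; exists ck; split; [rewrite mem_head | exists [::]].
  have [s ->] := HF ck (mem_head _ _) v Hv.
  by right; exists ck; split; [rewrite mem_head | exists s].
- have [->|[ck' [Hck' Hs]]] := IH (fun ck' H => HF ck' (@mem_behead _ (ck :: cs) _ H)) Hv; first by left.
  by right; exists ck'; split; rewrite ?in_cons ?Hck' ?orbT.
Qed.

Lemma vars_phi h q v : v \in fvars (phi h q) ->
  v = var q \/ exists c k l s, l < h /\ v = var (s ++ (c, k, l) :: q).
Proof.
elim: h q v => [|h IH] q v /=; first by move/vars_units; left.
rewrite fvars_cat mem_cat => /orP[/IH[->|[c [k [l [s [Hl ->]]]]]]|Hv]; first by left.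
  by right; exists c, k, l, s; split => //; apply: ltnW.
have HF : forall ck, ck \in kids h q -> forall v, v \in fvars (phi h (ck :: q)) ->
    exists s, v = var (s ++ ck :: q).
  move=> ck _ w /IH[->|[c [k [l [s [_ ->]]]]]]; first by exists [::].
  by exists (s ++ [:: (c, k, l)]); rewrite -catA.
have [->|[ck [Hck [s ->]]]] := vars_fold HF Hv; first by left.
have [c [k [-> _ _]]] := mem_kids Hck.
by right; exists c, k, h, s.
Qed.

Lemma tl_fold q (F : C * nat * nat -> seq (literal C)) (cs : pth) :
  uniq cs ->
  (forall ck, ck \in cs -> treelike delta (var (ck :: q)) (F ck)) ->
  (forall ck, ck \in cs -> forall v, v \in fvars (F ck) -> exists s, v = var (s ++ ck :: q)) ->
  treelike delta (var q) (flatten [seq evar (var q) (var (ck :: q)) ck.1.1 :: F ck | ck <- cs]).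
Proof.
elim: cs => [|ck cs IH]; first by move=> *; constructor.
rewrite map_cons flatten_cons' => /andP[Hck Hu] Ht Hv.
apply: tl_conj.
- apply: tl_edge1; first exact: Ht (mem_head _ _).
  apply/negP => /(Hv ck (mem_head _ _)) [s /var_inj E].
  exact: (cat_cons_neq (esym E)).
- by apply: IH => // ck' H; [apply: Ht | apply: Hv]; rewrite in_cons H orbT.
- move=> v H1 H2.
  have Hv' : forall ck', ck' \in cs -> forall v, v \in fvars (F ck') ->
      exists s, v = var (s ++ ck' :: q).
    by move=> ck' H; apply: Hv; rewrite in_cons H orbT.
  have [//|[ck' [Hin [s' Es']]]] := vars_fold Hv' H2.
  move: H1; rewrite /fvars /= !in_cons => /orP[/eqP//|/orP[/eqP E|H1]].
  + have E2 : [::] ++ ck :: q = s' ++ ck' :: q by apply: var_inj; rewrite -E -Es'.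
    have Eck := cat_cons_inj E2; rewrite -Eck in Hin.
    by rewrite Hin in Hck.
  + have [s Es] := Hv ck (mem_head _ _) v H1.
    have E2 : s ++ ck :: q = s' ++ ck' :: q by apply: var_inj; rewrite -Es -Es'.
    have Eck := cat_cons_inj E2; rewrite -Eck in Hin.
    by rewrite Hin in Hck.
Qed.

Lemma treelike_phi h q : treelike delta (var q) (phi h q).
Proof.
elim: h q => [|h IH] q /=.
  apply: tl_units; apply/allP => k; rewrite mem_filter mem_iota => /andP[_ /andP[_]].
  by rewrite add0n.
apply: tl_conj; first exact: IH.
- apply: tl_fold; first exact: uniq_kids.
  + by move=> ck _; apply: IH.
  + move=> ck _ w /vars_phi[->|[c [k [l [s [_ ->]]]]]]; first by exists [::].
    by exists (s ++ [:: (c, k, l)]); rewrite -catA.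
- move=> v /vars_phi[//|[c [k [l [s [Hl Ev]]]]]] H2.
  have HF : forall ck, ck \in kids h q -> forall v, v \in fvars (phi h (ck :: q)) ->
      exists s, v = var (s ++ ck :: q).
    move=> ck _ w /vars_phi[->|[c' [k' [l' [s' [_ ->]]]]]]; first by exists [::].
    by exists (s' ++ [:: (c', k', l')]); rewrite -catA.
  have [//|[ck [Hck [s' Es']]]] := vars_fold HF H2.
  have [c' [k' [Eck _ _]]] := mem_kids Hck.
  have E2 : s ++ (c, k, l) :: q = s' ++ ck :: q by apply: var_inj; rewrite -Ev -Es'.
  rewrite Eck in E2; have [_ _ El] := cat_cons_inj E2.
  by rewrite El ltnn in Hl.
Qed.


Lemma mem_phi h q l : l \in phi h q -> h <= hgt q -> hgt q + size q <= L ->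
  (exists k q', [/\ l = LAtom (AUn C k (TVar (var q'))), k < delta & FUn C k (g q') \in D]) \/
  (exists c k l' q', [/\ l = evar (var q') (var ((c, k, l') :: q')) c, k < dims N l',
      l' < hgt q', hgt q' + size q' <= L & nbrs D c (g q') != [::]]).
Proof.
elim: h q => [|h IH] q /= Hl Hh Hs.
- move: Hl => /mapP[k]; rewrite mem_filter mem_iota add0n => /andP[Hk /andP[_ Hk']] ->.
  by left; exists k, q.
- move: Hl; rewrite mem_cat => /orP[Hl|/flattenP[s' /mapP[ck Hck ->]]].
  + by apply: IH Hl _ Hs; apply: ltnW.
  + have [c [k [Eck Hk Hn]]] := mem_kids Hck; subst ck.
    rewrite in_cons => /orP[/eqP->|Hl].
    * by right; exists c, k, h, q; split.
    * by apply: IH Hl _ _ => //=; lia.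
Qed.

Lemma mem_phi0 l : l \in phi L [::] ->
  (exists k q', [/\ l = LAtom (AUn C k (TVar (var q'))), k < delta & FUn C k (g q') \in D]) \/
  (exists c k l' q', [/\ l = evar (var q') (var ((c, k, l') :: q')) c, k < dims N l',
      l' < hgt q', hgt q' + size q' <= L & nbrs D c (g q') != [::]]).
Proof. by move=> Hl; apply: mem_phi Hl _ _ => //=; rewrite addn0. Qed.

Lemma chain_phi n v : chain (phi L [::]) n v ->
  n = 0 \/ exists q, [/\ v = var q, n <= size q & hgt q + size q <= L].
Proof.
move=> H; elim: H => [w|m u w c _ IH Hin]; first by left.
right.
case: (mem_phi0 Hin) => [[k [q' [E _ _]]]|[c' [k [l' [q' [E Hk Hl Hq Hn]]]]]]; first by [].
rewrite /evar in E; case: E => _ Eu Ew.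
exists ((c', k, l') :: q'); split => //=; last by lia.
case: IH => [->//|[q'' [Eu' Hm _]]].
have Eq : q'' = q' by apply: var_inj; rewrite -Eu' -Eu.
by subst q''.
Qed.

Lemma fanout_phi v i : depth_is (phi L [::]) v i ->
  i <= L /\ fanout (phi L [::]) v <= #|C| * delta_N N * (L - i).
Proof.
case=> Hch _; have Hc := chain_phi Hch.
split; first by case: Hc => [->|[q [_ Hi Hq]]] //; lia.
rewrite /fanout; set s := pmap _ _.
have Hs : forall y, y \in s -> exists c k l q', [/\ v = var q', y = var ((c, k, l) :: q'),
    k < dims N l, l < hgt q' & hgt q' + size q' <= L].
  move=> y; rewrite mem_pmap => /mapP[l Hl].
  case: l Hl => [[c [u|u] [y'|y'] | i' t] | s1 t1] Hl //=.
  case: eqP => [Eu [Ey]|//]; subst u y'.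
  case: (mem_phi0 Hl) => [[k [q' [E _ _]]]|[c' [k [l' [q' [E Hk Hl' Hq Hn]]]]]]; first by [].
  rewrite /evar in E; case: E => _ Ev Ey.
  by exists c', k, l', q'.
case Es: s => [|y0 s0]; first by [].
have Hy0 : y0 \in s by rewrite Es mem_head.
have [c0 [k0 [l0 [q0 [Ev _ _ _ Hq0]]]]] := Hs y0 Hy0.
rewrite -Es.
have Hsub : {subset undup s <= [seq var ((c, kl.1, kl.2) :: q0) | c <- enum C,
    kl <- [seq (k, l) | k <- iota 0 (delta_N N), l <- iota 0 (hgt q0)]]}.
  move=> y; rewrite mem_undup => /Hs [c [k [l [q' [Ev' -> Hk Hl _]]]]].
  have Eq : q' = q0 by apply: var_inj; rewrite -Ev' -Ev.
  subst q'.
  apply/allpairsP; exists (c, (k, l)) => /=; split => //; first by rewrite mem_enum.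
  apply/allpairsP; exists (k, l); split => //=; rewrite mem_iota add0n //.
  have HlL : l < L.+1 by lia.
  have := leq_bigmax (F := fun i : 'I_L.+1 => dims N i) (Ordinal HlL).
  rewrite /delta_N /= => Hm; apply: leq_trans Hk Hm.
have := uniq_leq_size (undup_uniq s) Hsub.
rewrite !size_allpairs -cardE !size_iota => Hle.
apply: leq_trans Hle _.
rewrite -mulnA leq_mul2l leq_mul2l; apply/orP; right; apply/orP; right.
case: Hc => [->|[q [Ev2 Hi Hq]]]; first by lia.
have Eq : q = q0 by apply: var_inj; rewrite -Ev2 -Ev.
subst q; lia.
Qed.

Definition nu0 (v : nat) : nat := g (odflt [::] (unpickle v)).

Lemma nu0_var q : nu0 (var q) = g q.
Proof. by rewrite /nu0 /var pickleK. Qed.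

Lemma edge_in c k l q : nbrs D c (g q) != [::] -> FEdge c (g q) (g ((c, k, l) :: q)) \in D.
Proof. by move=> Hn; rewrite -mem_nbrs /=; apply: amax_in. Qed.

Lemma hom_D t : LAtom t \in phi L [::] -> gatom nu0 t \in D.
Proof.
case/mem_phi0 => [[k [q' [[->] _ H]]]|[c [k [l [q' [E _ _ _ Hn]]]]]].
- by rewrite /gatom /gterm nu0_var.
- rewrite /evar in E; case: E => ->; rewrite /gatom /gterm !nu0_var; exact: edge_in.
Qed.

Lemma vars_D v : v \in fvars (phi L [::]) -> nu0 v \in consts D.
Proof.
case/mem_fvars => l Hl Hv.
case: (mem_phi0 Hl) => [[k [q' [El _ H]]]|[c [k [l' [q' [El _ _ _ Hn]]]]]]; subst l.
- move: Hv; rewrite /= mem_seq1 => /eqP->; rewrite nu0_var.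
  by apply: (mem_consts H); rewrite /= mem_seq1.
- have H := edge_in k l' Hn.
  move: Hv; rewrite /= !in_cons orbF => /orP[/eqP->|/eqP->]; rewrite nu0_var;
  by apply: (mem_consts H); rewrite /= !in_cons eqxx ?orbT.
Qed.

Lemma noineq_phi : ~~ has (@is_ineq C) (phi L [::]).
Proof.
apply/hasPn => l /mem_phi0 [[k [q' [-> _ _]]]|[c [k [l' [q' [-> _ _ _ _]]]]]] //.
Qed.

Lemma lab_ge0 (Hrange : forall y : R, (0 <= y)%R <-> exists x, sigma N x = y)
  D' l x (k : 'I_(dims N l)) : (0 <= lab N D' l x k 0)%R.
Proof.
case: l k => [|l] k /=; first by rewrite /feat0 mxE; case: ifP.
by rewrite mxE; apply/Hrange; eexists.
Qed.

Lemma key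
  (HA : forall l i j, l < L -> (0 <= mA N l i j)%R)
  (HB : forall l c i j, l < L -> (0 <= mB N l c i j)%R)
  (Hsig : {homo sigma N : x y / (x <= y)%R})
  (Hrange : forall y : R, (0 <= y)%R <-> exists x, sigma N x = y)
  (Hd0 : dims N 0 = delta) D' (nu : nat -> nat) :
  forall h q, h <= L -> (forall t, LAtom t \in phi h q -> gatom nu t \in D') ->
  forall k : 'I_(dims N h), (lab N D h (g q) k 0 <= lab N D' h (nu (var q)) k 0)%R.
Proof.
elim=> [|h IH] q HL Hat k.
- rewrite /= /feat0 !mxE; case: ifP => H; last by case: ifP.
  have Hk : k < delta by rewrite -Hd0.
  have -> // : FUn C k (nu (var q)) \in D'.
  apply: (Hat (AUn C k (TVar (var q)))).
  by rewrite /= /units; apply: map_f; rewrite mem_filter H mem_iota add0n Hk.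
- have Hsubq : forall t, LAtom t \in phi h q -> gatom nu t \in D'.
    by move=> t Ht; apply: Hat; rewrite /= mem_cat Ht.
  rewrite /= mxE [X in (_ <= X)%R]mxE; apply: Hsig.
  rewrite !mxE !summxE; apply: lerD; last exact: lexx.
  apply: lerD.
  + apply: ler_sum => j _; apply: ler_wpM2l; first exact: HA.
    exact: (IH q (ltnW HL) Hsubq j).
  + apply: ler_sum => c _; rewrite ?mxE; apply: ler_sum => j _.
    apply: ler_wpM2l; first exact: HB.
    rewrite ?mxE.
    have [En|Hne] := eqVneq (nbrs D c (g q)) [::].
      rewrite En /=; apply: mmax_ge0 => x /mapP[b _ ->]; exact: lab_ge0.
    pose ch := (c, nat_of_ord j, h) :: q.
    have Hkid : (c, nat_of_ord j, h) \in kids h q by apply: in_kids.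
    have Hin : (evar (var q) (var ch) c :: phi h ch) \in
        [seq evar (var q) (var (ck :: q)) ck.1.1 :: phi h (ck :: q) | ck <- kids h q].
      by apply/mapP; exists (c, nat_of_ord j, h).
    have Hedge : FEdge c (nu (var q)) (nu (var ch)) \in D'.
      apply: (Hat (AEdge c (TVar (var q)) (TVar (var ch)))).
      rewrite /= mem_cat; apply/orP; right; apply/flattenP; exists (evar (var q) (var ch) c :: phi h ch) => //.
      exact: mem_head.
    have Hsub : forall t, LAtom t \in phi h ch -> gatom nu t \in D'.
      move=> t Ht; apply: Hat; rewrite /= mem_cat; apply/orP; right; apply/flattenP.
      by exists (evar (var q) (var ch) c :: phi h ch) => //; rewrite in_cons Ht orbT.
    have H1 : (mmax [seq lab N D h b j 0 | b <- nbrs D c (g q)] <= lab N D h (g ch) j 0)%R.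
      apply: mmax_le; first by rewrite -size_eq0 size_map size_eq0.
      move=> x /mapP[b Hb ->].
      have := amax_ge (fun b => ventry (lab N D h b) j) Hb.
      by rewrite /= /ventry !valK.
    have H2 := IH ch (ltnW HL) Hsub j.
    have H3 : (lab N D' h (nu (var ch)) j 0 <= mmax [seq lab N D' h b j 0 | b <- nbrs D' c (nu (var q))])%R.
      by apply: mmax_ge; apply/mapP; exists (nu (var ch)) => //; rewrite mem_nbrs.
    exact: le_trans H1 (le_trans H2 H3).
Qed.

End Construction.

Unset Implicit Arguments.

Theorem theorem6 (R : realType) (C : finType) (delta : nat) (N : gnn R C) :
  is_monotonic_max_gnn delta N ->
  forall D : seq (fact C), dataset delta D ->
  forall f : fact C,
    T_gnn N D f <-> (T_PiN delta N D f \/ (is_edge_fact f /\ f \in D)).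
Proof.
move=> [HL [Hd0 HdL] [HA HB] Hsig [_ Hrange]] D HD f; split.
- case: f => [c x y|i x] /=; first by move=> H; right.
  case=> Hx Hi Hthr; left.
  exists (Rule (phi delta N D x (nlayers N) [::]) (AUn C i (TVar (var (C:=C) [::])))).
  split.
  + exists (var (C:=C) [::]), i; split => //=.
    * by rewrite -HdL.
    * split; first exact: treelike_phi.
      by move=> v j _ Hd; apply: fanout_phi Hd.
    * exact: noineq_phi.
  + move=> D' _ f' [nu [Hv Ha _ ->]] /=; split => //.
    * by apply: Hv; rewrite /rule_vars mem_cat /= mem_seq1 eqxx orbT.
    * move: Hthr; rewrite /ventry; case: insubP => [k _ Ek|/negP//] Hthr.
      apply: le_trans Hthr _.
      exact: (key HA HB Hsig Hrange Hd0 (leqnn _) Ha k).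
  + exists (nu0 N D x); split.
    * move=> v; rewrite /rule_vars mem_cat => /orP[/vars_D //|].
      by rewrite /= mem_seq1 => /eqP->; rewrite nu0_var.
    * move=> t Ht; exact: hom_D Ht.
    * move=> s t Hst; exfalso; have := noineq_phi delta N D x.
      by move/hasPn/(_ _ Hst).
    * by rewrite /= nu0_var.
- case=> [[r [_ Hcap HT]]|[He Hin]]; first exact: Hcap D HD f HT.
  by case: f He Hin.
Qed.
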